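(* Let $m, n$ be positive integers with $m \mid n$, let $N < 2^n$ be an odd positive integer, and let $x < 2^m$ be a positive integer. Write $x = 2^t x'$ with $t \ge 0$ and $x'$ odd. Let $x_{\mathrm{minv}}$ be the inverse of $x'$ modulo $2^m$, set $z_0 = 0$ and for $j = 0, 1, \ldots, \frac{n-2m}{m}$ define $N_j = \lfloor N/2^{jm}\rfloor \bmod 2^m$, $\mathsf{ctrl}_j = [x_{\mathrm{minv}}(N_j - z_j)] \bmod 2^m \in [0,2^m-1]$, $z'_j = z_j + \mathsf{ctrl}_j\cdot x'$, $z_{j+1} = \lfloor z'_j/2^m\rfloor$. Let $z = z_{(n-m)/m}$, $s = \lfloor N/2^{n-m}\rfloor - z$, and $$\mathsf{out} = \left((-1)^{\frac{N^2-1}{8}}\right)^{t}\cdot (-1)^{\frac{(x'-1)(N-1)}{4}}\cdot\left((-1)^{\frac{x'^2-1}{8}}\right)^{n-m}\cdot\left(\frac{s}{x'}\right).$$ Then $\mathsf{out} = \left(\frac{x}{N}\right)$, and moreover $|s| < 2^m$.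
   Context: $\left(\frac{a}{b}\right)$ denotes the Jacobi symbol, defined for any integer $a$ (possibly negative) and odd positive integer $b = p_1^{e_1}\cdots p_k^{e_k}$ by $\left(\frac{a}{b}\right) = \prod_i \left(\frac{a}{p_i}\right)^{e_i}$, where the Legendre symbol $\left(\frac{a}{p}\right)$ is $0$ if $p\mid a$, $1$ if $a$ is a nonzero quadratic residue mod $p$, and $-1$ otherwise. *)

(* Defs.v *)
From mathcomp Require Import all_boot all_order all_algebra.
Set Implicit Arguments. Unset Strict Implicit. Unset Printing Implicit Defensive.
Import Order.TTheory GRing.Theory Num.Theory.
Local Open Scope ring_scope.

Definition legendre (a : int) (p : nat) : int :=
  if (p%:Z %| a)%Z then 0
  else if [exists y : 'I_p, ((y%:Z) ^+ 2 == a %[mod p%:Z])%Z] then 1 else -1.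

Definition jacobi (a : int) (b : nat) : int :=
  \prod_(p <- primes b) legendre a p ^+ logn p b.

Definition Nblock (N m j : nat) : nat := (N %/ 2 ^ (j * m)) %% 2 ^ m.

Definition ctrl (N m x' xminv j : nat) (zj : int) : int :=
  ((xminv%:Z * ((Nblock N m j)%:Z - zj)) %% (2 ^ m)%:Z)%Z.

Fixpoint zseq (N m x' xminv : nat) (j : nat) : int :=
  match j with
  | 0 => 0
  | j'.+1 =>
      let zj := zseq N m x' xminv j' in
      ((zj + ctrl N m x' xminv j' zj * x'%:Z) %/ (2 ^ m)%:Z)%Z
  end.

(* Main.v *)
Require Import Defs.
From mathcomp Require Import all_boot all_order all_algebra all_field.
From mathcomp Require Import zify ring lra.
Set Implicit Arguments. Unset Strict Implicit. Unset Printing Implicit Defensive.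
Import Order.TTheory GRing.Theory Num.Theory.
Local Open Scope ring_scope.

Lemma natFp0 (p n : nat) : prime p -> ((n%:R : 'F_p) == 0) = (p %| n)%N.
Proof.
move=> pp; apply/eqP/idP => [H|H].
  have := val_Fp_nat pp n; rewrite H /= => H0.
  by apply/eqP; rewrite -H0.
apply: val_inj; rewrite /= val_Fp_nat //; exact/eqP.
Qed.

Lemma intFp0 (p : nat) (z : int) : prime p -> ((z%:~R : 'F_p) == 0) = (p %| z)%Z.
Proof.
move=> pp; rewrite dvdzE /=.
rewrite [z in LHS]intEsign rmorphM /= rmorphXn /= mulf_eq0 expf_eq0.
rewrite (_ : (-1 : int)%:~R = -1) ?oppr_eq0 ?oner_eq0 ?andbF //=.
by rewrite (_ : (`|z|%N%:Z)%:~R = (`|z|%N)%:R) ?natFp0.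
Qed.

Lemma intFp_eq (p : nat) (u v : int) : prime p ->
  ((u%:~R : 'F_p) == v%:~R) = (u == v %[mod p])%Z.
Proof.
move=> pp; by rewrite -subr_eq0 -intrB intFp0 // eqz_mod_dvd.
Qed.

Lemma Fp_val_lt (p : nat) (y : 'F_p) : prime p -> (val y < p)%N.
Proof. by move=> pp; have := ltn_ord y; move=> /leq_trans; apply; rewrite Fp_cast. Qed.

Lemma Fp_valK (p : nat) (y : 'F_p) : prime p -> (val y)%:R = y.
Proof.
move=> pp; apply: val_inj; by rewrite /= val_Fp_nat // modn_small // Fp_val_lt.
Qed.

Lemma oddp_h (p : nat) : odd p -> p = (2 * p./2).+1.
Proof. by move=> op; rewrite -{1}(odd_double_half p) op add1n -muln2 mulnC. Qed.

Lemma twoh (p : nat) : odd p -> (2 * p./2)%N = p.-1.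
Proof. by move=> op; rewrite {2}(oddp_h op). Qed.

Lemma oddprime_h (p : nat) : prime p -> odd p -> (0 < p./2)%N.
Proof.
move=> pp op; have := prime_gt1 pp; rewrite {1}(oddp_h op); lia.
Qed.

Lemma pm_inj (p i j : nat) : prime p -> odd p -> (i < p./2)%N -> (j < p./2)%N ->
  ((i.+1)%:R : 'F_p) = (j.+1)%:R \/ ((i.+1)%:R : 'F_p) = - (j.+1)%:R -> i = j.
Proof.
move=> pp op hi hj; have hp := oddp_h op.
case=> [E|E].
  have := congr1 val E; rewrite /= !val_Fp_nat // !modn_small; lia.
move/eqP: E; rewrite -subr_eq0 opprK -natrD natFp0 // => /dvdn_leq.
lia.
Qed.

Lemma Fp_unit_pow (p : nat) (y : 'F_p) : prime p -> y != 0 -> y ^+ p.-1 = 1.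
Proof.
move=> pp y0; apply: (mulIf y0); rewrite mul1r -exprSr prednK ?prime_gt0 //.
by have := expf_card y; rewrite card_Fp.
Qed.

Lemma euler_sq (p : nat) (y : 'F_p) : prime p -> odd p -> y != 0 ->
  (y ^+ 2) ^+ p./2 = 1.
Proof.
move=> pp op y0; rewrite -exprM.
have -> : (2 * p./2 = p.-1)%N by rewrite {2}(oddp_h op).
exact: Fp_unit_pow.
Qed.

Lemma euler_nsq (p : nat) (a : 'F_p) : prime p -> odd p -> a != 0 ->
  (forall y : 'F_p, y ^+ 2 != a) -> a ^+ p./2 = -1.
Proof.
move=> pp op a0 nsq; set h := p./2.
have h0 := oddprime_h pp op.
have : (a ^+ h) ^+ 2 == 1.
  by rewrite -exprM mulnC twoh // Fp_unit_pow.
rewrite sqrf_eq1 => /orP[/eqP E|/eqP //].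
exfalso.
pose P : {poly 'F_p} := 'X^h - 1%:P.
pose rs := a :: [seq ((i.+1)%:R : 'F_p) ^+ 2 | i <- iota 0 h].
have P0 : P != 0 by apply: monic_neq0; apply: monicXnsubC.
have : (size rs < size P)%N.
  apply: max_poly_roots => //.
    rewrite /= /root !hornerE E subrr eqxx /=.
    apply/allP => x /mapP [i + ->]; rewrite mem_iota => hi.
    rewrite /root !hornerE euler_sq ?subrr //.
    by rewrite natFp0 //; apply/negP => /dvdn_leq; have := oddp_h op; lia.
  rewrite /= andbC map_inj_in_uniq ?iota_uniq //=.
    apply/mapP => [[i _ E2]]; by move: (nsq ((i.+1)%:R)); rewrite -E2 eqxx.
  move=> i j; rewrite !mem_iota /= !add0n => hi hj /eqP.
  rewrite eqf_sqr => /orP[/eqP E2|/eqP E2]; apply: (pm_inj pp op hi hj); by [left|right].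
by rewrite size_XnsubC //= size_map size_iota ltnn.
Qed.

Definition sgn3 (u : int) := [|| u == 0, u == 1 | u == -1].

Lemma leg_sgn3 a p : sgn3 (legendre a p).
Proof. by rewrite /legendre; case: ifP => _ //; case: ifP. Qed.

Lemma sgn3M u v : sgn3 u -> sgn3 v -> sgn3 (u * v).
Proof.
by case/or3P => /eqP -> ; case/or3P => /eqP ->.
Qed.

Lemma sgn3_inj (p : nat) (u v : int) : prime p -> odd p -> sgn3 u -> sgn3 v ->
  (u%:~R : 'F_p) = v%:~R -> u = v.
Proof.
move=> pp op su sv /eqP; rewrite intFp_eq // eqz_mod_dvd.
have p3 : (2 < p)%N by have := prime_gt1 pp; have := oddp_h op; lia.
have nd1 : ~~ (p %| 1)%N by rewrite dvdn1; apply/eqP; lia.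
have nd2 : ~~ (p %| 2)%N by apply/negP => /dvdn_leq; lia.
by case/or3P: su => /eqP ->; case/or3P: sv => /eqP -> //=; rewrite dvdzE /=;
  rewrite ?(negPf nd1) ?(negPf nd2).
Qed.

Lemma leg_Fp (p : nat) (a : int) : prime p -> odd p ->
  ((legendre a p)%:~R : 'F_p) = (a%:~R : 'F_p) ^+ p./2.
Proof.
move=> pp op; have h0 := oddprime_h pp op.
rewrite /legendre; case: ifP => [pa|pa].
  by move: pa; rewrite -intFp0 // => /eqP ->; rewrite expr0n gtn_eqF.
have a0 : (a%:~R : 'F_p) != 0 by rewrite intFp0 // pa.
case: ifP => [/existsP [y /eqP Ey]|nex].
  have E : ((val y)%:R : 'F_p) ^+ 2 = a%:~R.
    apply/eqP; rewrite -(_ : ((val y)%:Z ^+ 2)%:~R = ((val y)%:R : 'F_p) ^+ 2).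
      by rewrite intFp_eq //; apply/eqP.
    by rewrite rmorphXn.
  rewrite -E euler_sq //; apply/negP => /eqP y0; move: a0; by rewrite -E y0 expr0n.
rewrite euler_nsq // => y; apply/negP => /eqP Ey; move/negbT/negP: nex; apply.
apply/existsP; exists (Ordinal (Fp_val_lt y pp)).
rewrite -intFp_eq // -Ey rmorphXn /=; apply/eqP; congr (_ ^+ _).
exact: Fp_valK.
Qed.

Lemma leg_mul (p : nat) (a b : int) : prime p -> odd p ->
  legendre (a * b) p = legendre a p * legendre b p.
Proof.
move=> pp op; apply: (sgn3_inj pp op); rewrite ?sgn3M ?leg_sgn3 //.
by rewrite rmorphM /= !leg_Fp // rmorphM /= exprMn.
Qed.

Lemma leg_one (p : nat) : prime p -> odd p -> legendre 1 p = 1.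
Proof.
move=> pp op; apply: (sgn3_inj pp op); rewrite ?leg_sgn3 //.
by rewrite leg_Fp // expr1n.
Qed.

Lemma leg_mod (p : nat) (a b : int) : (a == b %[mod p])%Z -> legendre a p = legendre b p.
Proof.
move=> /eqP E; rewrite /legendre.
have -> : (p %| a)%Z = (p %| b)%Z.
  by apply/dvdz_mod0P/dvdz_mod0P; rewrite E.
by rewrite E.
Qed.

Lemma odd_sum_eq (I : Type) (r : seq I) (F G : I -> nat) :
  (forall i, odd (F i) = odd (G i)) ->
  odd (\sum_(i <- r) F i) = odd (\sum_(i <- r) G i).
Proof.
move=> H; elim/big_rec2: _ => // i y1 y2 _ IH; by rewrite !oddD IH H.
Qed.

Definition gr (p a k : nat) : nat := ((k.+1) * a) %% p.
Definition gb (p a k : nat) : bool := (p./2 < gr p a k)%N.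
Definition gn (p a k : nat) : nat := if gb p a k then (p - gr p a k)%N else gr p a k.

Lemma gr_pos p a k : prime p -> odd p -> ~~ (p %| a)%N -> (k < p./2)%N -> (0 < gr p a k)%N.
Proof.
move=> pp op pa hk; rewrite lt0n; apply/negP => /eqP /eqP.
rewrite -/(dvdn p _) Euclid_dvdM // (negPf pa) orbF => /dvdn_leq.
have := oddp_h op; lia.
Qed.

Lemma gn_bound p a k : prime p -> odd p -> ~~ (p %| a)%N -> (k < p./2)%N ->
  (0 < gn p a k <= p./2)%N.
Proof.
move=> pp op pa hk; have := gr_pos pp op pa hk.
have := ltn_pmod ((k.+1) * a) (prime_gt0 pp).
rewrite /gn /gb -/(gr p a k); have := oddp_h op; case: ifP; lia.
Qed.

Lemma gn_Fp p a k : prime p ->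
  ((gn p a k)%:R : 'F_p) = (-1) ^+ gb p a k * ((k.+1)%:R * a%:R).
Proof.
move=> pp; rewrite -natrM /gn /gr; case: ifP => _.
  rewrite natrB; last exact/ltnW/ltn_pmod/prime_gt0.
  by rewrite pchar_Fp_0 // sub0r Fp_nat_mod // expr1 mulN1r.
by rewrite Fp_nat_mod // expr0 mul1r.
Qed.

Lemma gn_inj p a i j : prime p -> odd p -> ~~ (p %| a)%N -> (i < p./2)%N -> (j < p./2)%N ->
  gn p a i = gn p a j -> i = j.
Proof.
move=> pp op pa hi hj E.
have a0 : (a%:R : 'F_p) != 0 by rewrite natFp0.
have : ((gn p a i)%:R : 'F_p) ^+ 2 == ((gn p a j)%:R) ^+ 2 by rewrite E.
rewrite !gn_Fp // !exprMn !sqrr_sign !mul1r -!exprMn eqf_sqr.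
case/orP => /eqP E2; apply: (pm_inj pp op hi hj).
  by left; apply: (mulIf a0).
by right; apply: (mulIf a0); rewrite E2 mulNr.
Qed.

Lemma gf_lt p a k : prime p -> odd p -> ~~ (p %| a)%N -> (k < p./2)%N ->
  ((gn p a k).-1 < p./2)%N.
Proof. move=> pp op pa hk; have := gn_bound pp op pa hk; lia. Qed.

Definition gf (p a : nat) (pp : prime p) (op : odd p) (pa : ~~ (p %| a)%N)
  (k : 'I_(p./2)) : 'I_(p./2) := Ordinal (gf_lt pp op pa (ltn_ord k)).

Lemma gf_inj p a pp op pa : injective (@gf p a pp op pa).
Proof.
move=> i j /(congr1 val) /= E; apply: ord_inj; apply: (gn_inj pp op pa); rewrite ?ltn_ord //.
have := gn_bound pp op pa (ltn_ord i); have := gn_bound pp op pa (ltn_ord j); lia.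
Qed.

Lemma gf_val p a pp op pa k : (val (@gf p a pp op pa k)).+1 = gn p a k.
Proof. rewrite /=; have := gn_bound pp op pa (ltn_ord k); lia. Qed.

Lemma gf_val' p a pp op pa k : (nat_of_ord (@gf p a pp op pa k)).+1 = gn p a k.
Proof. exact: gf_val. Qed.

Lemma gauss p a : prime p -> odd p -> ~~ (p %| a)%N ->
  (a%:R : 'F_p) ^+ p./2 = (-1) ^+ (\sum_(k < p./2) gb p a k).
Proof.
move=> pp op pa.
have P0 : \prod_(k < p./2) ((k.+1)%:R : 'F_p) != 0.
  apply/prodf_neq0 => k _; rewrite natFp0 //; apply/negP => /dvdn_leq.
  have := ltn_ord k; have := oddp_h op; lia.
have E : \prod_(k < p./2) ((gn p a k)%:R : 'F_p) = \prod_(k < p./2) ((k.+1)%:R : 'F_p).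
  rewrite [RHS](reindex_inj (@gf_inj p a pp op pa)) /=.
  by apply: eq_bigr => k _; rewrite gf_val.
move: E; under eq_bigr => k _ do rewrite gn_Fp //.
rewrite big_split /= big_split /=.
rewrite prodrXr prodr_const card_ord => E.
have E2 : (-1) ^+ (\sum_(k < p./2) gb p a k) * (a%:R : 'F_p) ^+ p./2 = 1.
  apply: (mulIf P0); rewrite mul1r -[RHS]E; ring.
by rewrite -[LHS](signrMK (\sum_(k < p./2) gb p a k)) E2 mulr1.
Qed.

Lemma eisenstein p a : prime p -> odd p -> ~~ (p %| a)%N -> odd a ->
  odd (\sum_(k < p./2) gb p a k) = odd (\sum_(k < p./2) ((k.+1) * a) %/ p).
Proof.
move=> pp op pa oa.
set S := (\sum_(k < p./2) k.+1)%N.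
have E1 : (\sum_(k < p./2) gn p a k)%N = S.
  rewrite /S [RHS](reindex_inj (@gf_inj p a pp op pa)) /=.
  by apply: eq_bigr => k _; rewrite gf_val'.
have E2 : (a * S = p * \sum_(k < p./2) ((k.+1) * a) %/ p + \sum_(k < p./2) gr p a k)%N.
  rewrite /S big_distrr big_distrr /= -big_split /=.
  apply: eq_bigr => k _; rewrite /gr mulnC [(p * _)%N]mulnC -divn_eq; ring.
have E3 : odd (\sum_(k < p./2) gr p a k + S)%N = odd (\sum_(k < p./2) gb p a k).
  rewrite -E1 -big_split /=; apply: odd_sum_eq => k.
  rewrite /gn; case: ifP => _ /=.
    rewrite subnKC ?op //; exact/ltnW/ltn_pmod/prime_gt0.
  by rewrite addnn odd_double.
move: E3; rewrite oddD => <-.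
have := congr1 odd E2; rewrite oddD !oddM oa op /=.
by case: (odd S); case: (odd (\sum_(k < p./2) gr p a k)); case: odd.
Qed.

Lemma sum_ge (n c : nat) : (\sum_(k < n) (c <= k)%N)%N = (n - c)%N.
Proof.
elim: n => [|n IH]; first by rewrite big_ord0.
rewrite big_ord_recr /= IH; case: leqP => H; lia.
Qed.

Lemma sum_lt (n c : nat) : (\sum_(k < n) (k < c)%N)%N = minn n c.
Proof.
elim: n => [|n IH]; first by rewrite big_ord0 min0n.
rewrite big_ord_recr /= IH; case: leqP => H; lia.
Qed.

Lemma gauss2 p : prime p -> odd p ->
  (\sum_(k < p./2) gb p 2 k)%N = (p./2 - p./2./2)%N.
Proof.
move=> pp op.
have E : forall k, (k < p./2)%N -> gb p 2 k = (p./2./2 <= k)%N.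
  move=> k hk; rewrite /gb /gr modn_small; last by have := oddp_h op; lia.
  move: hk; set h := p./2; rewrite -(odd_double_half h).
  set u := h./2; case: (odd h) => /= hk; apply/idP/idP; lia.
rewrite -sum_ge; apply: eq_bigr => k _; by rewrite E.
Qed.

Lemma sgn3_sign n : sgn3 ((-1) ^+ n).
Proof. by rewrite -signr_odd; case: odd. Qed.

Lemma leg_gauss p a : prime p -> odd p -> ~~ (p %| a)%N ->
  legendre a%:Z p = (-1) ^+ (\sum_(k < p./2) gb p a k).
Proof.
move=> pp op pa; apply: (sgn3_inj pp op); rewrite ?leg_sgn3 ?sgn3_sign //.
by rewrite leg_Fp // rmorph_sign -gauss.
Qed.

Lemma sum_const_ord (n c : nat) : (\sum_(k < n) c)%N = (n * c)%N.
Proof.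
elim: n => [|n IH]; first by rewrite big_ord0.
by rewrite big_ord_recr /= IH mulSn addnC.
Qed.

Lemma sq8_odd p : odd p ->
  odd ((p ^ 2 - 1) %/ 8) = odd (p./2 - p./2./2).
Proof.
move=> op; have hp := oddp_h op; move: hp.
set h := p./2; rewrite -(odd_double_half h); set u := h./2.
case: (odd h) => /= hp.
  have -> : (p ^ 2 - 1 = 8 * ((u.*2.+1) * u.+1))%N.
    rewrite hp -!muln2; nia.
  rewrite mulKn // oddM /= -!muln2 oddM andbF /=.
  rewrite add0n muln2 uphalf_double.
  by have -> : (1 + u.*2 - u = u.+1)%N by lia.
have -> : (p ^ 2 - 1 = 8 * (u * (u.*2.+1)))%N.
  rewrite hp -!muln2; nia.
rewrite mulKn // oddM /= add0n doubleK.
have -> : (u.*2 - u = u)%N by lia.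
by rewrite odd_double andbT.
Qed.

Lemma leg2 p : prime p -> odd p -> legendre 2 p = (-1) ^+ ((p ^ 2 - 1) %/ 8).
Proof.
move=> pp op.
have p2 : ~~ (p %| 2)%N.
  apply/negP => /dvdn_leq; have := prime_gt1 pp; have := oddp_h op; lia.
rewrite (leg_gauss pp op p2) gauss2 // -signr_odd -sq8_odd // signr_odd //.
Qed.

Lemma floor_count p q k : prime p -> prime q -> odd p -> odd q -> (k < p./2)%N ->
  (((k.+1) * q) %/ p = \sum_(j < q./2) ((j.+1) * p <= (k.+1) * q))%N.
Proof.
move=> pp pq op oq hk.
have E : forall j : 'I_q./2, ((j.+1) * p <= (k.+1) * q)%N = (j < ((k.+1) * q) %/ p)%N.
  by move=> j; rewrite -leq_divRL // prime_gt0.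
transitivity (\sum_(j < q./2) (j < ((k.+1) * q) %/ p)%N)%N; last first.
  by apply: eq_bigr => j _; rewrite E.
rewrite (sum_lt q./2 (((k.+1) * q) %/ p)); apply/esym/minn_idPr.
rewrite -ltnS ltn_divLR ?prime_gt0 //.
have := oddp_h op; have := oddp_h oq; nia.
Qed.

Lemma lattice p q : prime p -> prime q -> odd p -> odd q -> p != q ->
  (\sum_(k < p./2) ((k.+1) * q) %/ p + \sum_(j < q./2) ((j.+1) * p) %/ q =
   p./2 * q./2)%N.
Proof.
move=> pp pq op oq pq'.
rewrite (eq_bigr _ (fun k _ => floor_count pp pq op oq (ltn_ord k))).
rewrite (eq_bigr _ (fun k _ => floor_count pq pp oq op (ltn_ord k))).
rewrite [X in (_ + X)%N]exchange_big /= -big_split /=.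
rewrite -sum_const_ord; apply: eq_bigr => k _.
rewrite -big_split /= -[RHS]muln1 -[RHS]sum_const_ord; apply: eq_bigr => j _.
have : ((j.+1) * p != (k.+1) * q)%N.
  apply/negP => /eqP E.
  have : (p %| (k.+1) * q)%N by rewrite -E dvdn_mull.
  rewrite Euclid_dvdM // [(p %| q)%N]dvdn_prime2 // (negPf pq') orbF => /dvdn_leq.
  have := ltn_ord k; have := oddp_h op; lia.
move/eqP => H.
case: (leqP ((j.+1) * p) ((k.+1) * q)) => H1; case: (leqP ((k.+1) * q) ((j.+1) * p)) => H2 /=; lia.
Qed.

Lemma leg_eisen p q : prime p -> prime q -> odd p -> odd q -> p != q ->
  legendre q%:Z p = (-1) ^+ (\sum_(k < p./2) ((k.+1) * q) %/ p).
Proof.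
move=> pp pq op oq pq'.
have pq2 : ~~ (p %| q)%N by rewrite dvdn_prime2.
by rewrite leg_gauss // -signr_odd eisenstein // signr_odd.
Qed.

Lemma leg_QR p q : prime p -> prime q -> odd p -> odd q -> p != q ->
  legendre q%:Z p * legendre p%:Z q = (-1) ^+ (p./2 * q./2).
Proof.
move=> pp pq op oq pq'.
by rewrite leg_eisen // leg_eisen // 1?eq_sym // -exprD lattice.
Qed.

Lemma odd_div_odd p b : odd b -> (p %| b)%N -> odd p.
Proof.
move=> ob pb; apply/negP => /negP; rewrite -dvdn2 => /dvdn_trans /(_ pb).
by rewrite dvdn2 ob.
Qed.

Lemma primes_odd p b : odd b -> p \in primes b -> prime p /\ odd p.
Proof.
move=> ob; rewrite mem_primes => /and3P [pp _ pb]; split => //.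
exact: odd_div_odd pb.
Qed.

Lemma J_mod a c b : (a == c %[mod b%:Z])%Z -> jacobi a b = jacobi c b.
Proof.
move=> E; rewrite /jacobi; apply: eq_big_seq => p; rewrite mem_primes => /and3P [_ _ pb].
congr (_ ^+ _); apply: leg_mod; move: E; rewrite !eqz_mod_dvd => /(dvdz_trans _); apply.
by rewrite dvdzE.
Qed.

Lemma J_mull a c b : odd b -> jacobi (a * c) b = jacobi a b * jacobi c b.
Proof.
move=> ob; rewrite /jacobi -big_split /=; apply: eq_big_seq => p /(primes_odd ob) [pp op].
by rewrite leg_mul // exprMn.
Qed.

Lemma J_one b : odd b -> jacobi 1 b = 1.
Proof.
move=> ob; rewrite /jacobi big1_seq // => p /andP [_ /(primes_odd ob) [pp op]].
by rewrite leg_one // expr1n.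
Qed.

Lemma J_b1 a : jacobi a 1 = 1.
Proof. by rewrite /jacobi big_nil. Qed.

Lemma J_prime a p : prime p -> jacobi a p = legendre a p.
Proof.
by move=> pp; rewrite /jacobi primes_prime // big_seq1 logn_prime // eqxx expr1.
Qed.

Lemma J_big a b B : (0 < b)%N -> (b < B)%N ->
  jacobi a b = \prod_(p < B) legendre a p ^+ logn p b.
Proof.
move=> b0 bB.
rewrite (bigID (fun p : 'I_B => (val p) \in primes b)) /=.
rewrite [X in _ = _ * X]big1 ?mulr1; last first.
  move=> p /negPf; rewrite -logn_gt0 => /negbT; rewrite -leqNgt leqn0 => /eqP ->.
  by rewrite expr0.
rewrite -(big_mkord (fun p => p \in primes b) (fun p => legendre a p ^+ logn p b)).
rewrite /index_iota subn0 -big_filter /jacobi.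
apply: perm_big; apply: uniq_perm; rewrite ?filter_uniq ?iota_uniq ?primes_uniq //.
move=> p; rewrite mem_filter mem_iota /= add0n.
apply/idP/andP => [H|[]//]; split => //.
move: H; rewrite mem_primes => /and3P [_ _ /(dvdn_leq b0) H]; exact: leq_ltn_trans H bB.
Qed.

Lemma J_mulr a b c : (0 < b)%N -> (0 < c)%N -> jacobi a (b * c) = jacobi a b * jacobi a c.
Proof.
move=> b0 c0.
have bc0 : (0 < b * c)%N by rewrite muln_gt0 b0.
rewrite !(@J_big a _ (b * c).+1) //; try (rewrite ltnS; first [exact: leq_pmulr | exact: leq_pmull]).
rewrite -big_split /=; apply: eq_bigr => p _; by rewrite lognM // exprD.
Qed.

Lemma odd_ind (P : nat -> Prop) : P 1%N -> (forall p, prime p -> odd p -> P p) ->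
  (forall a b, odd a -> odd b -> (0 < a)%N -> (0 < b)%N -> P a -> P b -> P (a * b)%N) ->
  forall n, odd n -> P n.
Proof.
move=> H1 Hp HM n; elim: n {-2}n (leqnn n) => [|N IH] n hn on.
  by move: hn on; rewrite leqn0 => /eqP ->.
case: (ltngtP n 1) => [|n1|->] //; first by case: n on {hn} => [|[]].
have pp := pdiv_prime n1; have pd := pdiv_dvd n.
have op := odd_div_odd on pd.
have E := divnK pd.
have n0 : (0 < n)%N by lia.
have lt := ltn_Pdiv (prime_gt1 pp) n0.
move: E lt; set d := pdiv n; set k := (n %/ d)%N => E lt.
have od : odd k by move: on; rewrite -E oddM => /andP [].
rewrite -E; case: (ltngtP k 1) => [|H|H].
- by rewrite ltnS leqn0 => /eqP H; move: E; rewrite H mul0n => E; lia.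
- apply: HM => //; first by lia.
  + exact: prime_gt0.
  + apply: IH => //; lia.
  + exact: Hp.
- by rewrite H mul1n; apply: Hp.
Qed.

Lemma sq8_eq a : odd a -> (a ^ 2 = 8 * ((a ^ 2 - 1) %/ 8) + 1)%N.
Proof.
move=> oa; have ha := oddp_h oa; set u := a./2 in ha.
have := odd_double_half (u * u.+1).
rewrite oddM /= andbN add0n -muln2; set X := ((u * u.+1)./2)%N => HX.
have -> : (a ^ 2 - 1 = 8 * X)%N by rewrite ha; nia.
rewrite mulKn //; rewrite ha; nia.
Qed.

Lemma sign8M a b : odd a -> odd b ->
  (-1) ^+ (((a * b) ^ 2 - 1) %/ 8) = ((-1) ^+ ((a ^ 2 - 1) %/ 8) * (-1) ^+ ((b ^ 2 - 1) %/ 8) :> int).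
Proof.
move=> oa ob; have Ha := sq8_eq oa; have Hb := sq8_eq ob.
set A := ((a ^ 2 - 1) %/ 8)%N in Ha *; set B := ((b ^ 2 - 1) %/ 8)%N in Hb *.
have -> : ((a * b) ^ 2 - 1 = 8 * (8 * A * B + A + B))%N.
  by rewrite expnMn Ha Hb; nia.
rewrite mulKn // -signr_odd !oddD !oddM /= signr_addb.
by rewrite !signr_odd.
Qed.

Lemma J2 b : odd b -> jacobi 2 b = (-1) ^+ ((b ^ 2 - 1) %/ 8).
Proof.
move: b; apply: (@odd_ind (fun b => jacobi 2 b = (-1) ^+ ((b ^ 2 - 1) %/ 8))).
- by rewrite J_b1.
- by move=> p pp op; rewrite J_prime // leg2.
- move=> a b oa ob a0 b0 IHa IHb.
  by rewrite J_mulr // IHa IHb sign8M.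
Qed.

Definition qe (a b : nat) : int := (-1) ^+ (a./2 * b./2).

Lemma qe_eq a b : odd a -> odd b -> qe a b = (-1) ^+ (((a - 1) * (b - 1)) %/ 4).
Proof.
move=> oa ob; rewrite /qe; have ha := oddp_h oa; have hb := oddp_h ob.
have -> : ((a - 1) * (b - 1) = 4 * (a./2 * b./2))%N.
  rewrite {1}ha {1}hb; nia.
by rewrite mulKn.
Qed.

Lemma half_oddM a b : odd a -> odd b -> odd (a * b)./2 = odd a./2 (+) odd b./2.
Proof.
move=> oa ob; have ha := oddp_h oa; have hb := oddp_h ob.
have hab : (a * b = (2 * (a * b)./2).+1)%N by apply: oddp_h; rewrite oddM oa ob.
have -> : ((a * b)./2 = 2 * (a./2 * b./2) + a./2 + b./2)%N.
  move: hab; rewrite {1}ha {1}hb; nia.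
rewrite !oddD oddM /=; by case: (odd a./2); case: (odd b./2).
Qed.

Lemma qeMl a b c : odd a -> odd b -> qe (a * b) c = qe a c * qe b c.
Proof.
move=> oa ob; rewrite /qe -signr_odd oddM half_oddM //.
rewrite -[in RHS]signr_odd -[X in _ * X]signr_odd !oddM.
by case: (odd a./2); case: (odd b./2); case: (odd c./2); rewrite /= ?expr0 ?expr1 ?mulr1 ?mul1r ?mulrNN ?mulr1.
Qed.

Lemma qeC a b : qe a b = qe b a.
Proof. by rewrite /qe mulnC. Qed.

Lemma qe1 a : qe 1 a = 1.
Proof. by rewrite /qe. Qed.

Lemma leg_pp p : prime p -> legendre p%:Z p = 0.
Proof. by move=> pp; rewrite /legendre dvdzz. Qed.

Lemma QR_primes p q : prime p -> prime q -> odd p -> odd q ->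
  jacobi p q = qe p q * jacobi q p.
Proof.
move=> pp pq op oq; rewrite !J_prime //.
case: (eqVneq p q) => [->|pq']; first by rewrite leg_pp // mulr0.
have := leg_QR pp pq op oq pq'; rewrite /qe => <-.
rewrite mulrC mulrA (leg_eisen pp pq op oq pq') -expr2 sqrr_sign mul1r //.
Qed.

Lemma QR_prime_left p b : prime p -> odd p -> odd b -> jacobi p b = qe p b * jacobi b p.
Proof.
move=> pp op; move: b; apply: (@odd_ind (fun b => jacobi p b = qe p b * jacobi b p)).
- by rewrite J_b1 J_one // qeC qe1.
- by move=> q pq oq; apply: QR_primes.
- move=> a b oa ob a0 b0 IHa IHb.
  rewrite J_mulr // IHa IHb (qeC p (a * b)) qeMl // (qeC a p) (qeC b p) PoszM J_mull //; ring.
Qed.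

Lemma J_QR a b : odd a -> odd b -> jacobi a b = qe a b * jacobi b a.
Proof.
move=> oa ob; move: a oa; apply: (@odd_ind (fun a => jacobi a b = qe a b * jacobi b a)).
- by rewrite J_b1 J_one // qe1 mul1r.
- by move=> p pp op; apply: QR_prime_left.
- move=> a c oa oc a0 c0 IHa IHc.
  rewrite PoszM J_mull // IHa IHc J_mulr // qeMl //; ring.
Qed.

Lemma J_pow2 k b : odd b -> jacobi (2 ^ k)%N%:Z b = (jacobi 2 b) ^+ k.
Proof.
move=> ob; elim: k => [|k IH]; first by rewrite expn0 J_one.
by rewrite expnS PoszM J_mull // IH exprS.
Qed.

Lemma zstep N m x' xminv j (zj : int) : (0 < m)%N -> (0 < x')%N ->
  (xminv * x' == 1 %[mod 2 ^ m])%N -> 0 <= zj -> zj < x'%:Z ->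
  zj + ctrl N m x' xminv j zj * x'%:Z =
    (Nblock N m j)%:Z + (2 ^ m)%:Z * ((zj + ctrl N m x' xminv j zj * x'%:Z) %/ (2 ^ m)%:Z)%Z
  /\ 0 <= ((zj + ctrl N m x' xminv j zj * x'%:Z) %/ (2 ^ m)%:Z)%Z < x'%:Z.
Proof.
move=> m0 x0 hinv z0 zx.
have D2 : (2 <= 2 ^ m)%N by rewrite -{1}(expn1 2) leq_exp2l.
move: hinv; rewrite /ctrl; set D := (2 ^ m)%N; set Nj := Nblock N m j => hinv.
have NjD : (Nj < D)%N by rewrite /Nj /Nblock ltn_pmod //; lia.
set y := (xminv%:Z * (Nj%:Z - zj))%R.
have Hy := divz_eq y D%:Z.
set c := (y %% D%:Z)%Z.
have c0 : 0 <= c by rewrite /c modz_ge0 //; apply/eqP; lia.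
have cD : c < D%:Z by rewrite /c ltz_pmod //; lia.
have Hc : c = y - (y %/ D%:Z)%Z * D%:Z.
  by apply/eqP; rewrite eq_sym subr_eq addrC; apply/eqP; exact: Hy.
move: Hc; set q := (y %/ D%:Z)%Z => Hc.
have Hinv : (xminv * x' = (xminv * x') %/ D * D + 1)%N.
  by rewrite {1}(divn_eq (xminv * x') D) (eqP hinv) modn_small.
set r := ((xminv * x') %/ D)%N in Hinv.
have Hx : xminv%:Z * x'%:Z = r%:Z * D%:Z + 1.
  by rewrite -PoszM Hinv PoszD PoszM.
set W := r%:Z * (Nj%:Z - zj) - q * x'%:Z.
have E : zj + c * x'%:Z = Nj%:Z + D%:Z * W.
  rewrite Hc /y /W.
  transitivity (zj + (xminv%:Z * x'%:Z) * (Nj%:Z - zj) - q * D%:Z * x'%:Z); first by ring.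
  rewrite Hx; ring.
have EW : ((zj + c * x'%:Z) %/ D%:Z)%Z = W.
  rewrite E addrC mulrC divzMDl; last by apply/eqP; lia.
  by rewrite divz_small ?addr0 //; apply/andP; split; lia.
rewrite EW; split => //.
clear EW Hy Hc Hx Hinv hinv; clearbody W c q y r.
have cx : c * x'%:Z <= (D%:Z - 1) * x'%:Z by rewrite ler_wpM2r //; lia.
have cx0 : 0 <= c * x'%:Z by rewrite mulr_ge0.
have H1 : Nj%:Z + D%:Z * W < D%:Z * x'%:Z.
  rewrite -E; have -> : D%:Z * x'%:Z = (D%:Z - 1) * x'%:Z + x'%:Z by ring.
  lia.
have H2 : 0 < D%:Z * (W + 1).
  have -> : D%:Z * (W + 1) = (zj + c * x'%:Z) + (D%:Z - Nj%:Z) by rewrite E; ring.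
  lia.
rewrite pmulr_rgt0 in H2; last by lia.
have H3 : D%:Z * W < D%:Z * x'%:Z by lia.
rewrite ltr_pM2l in H3; last by lia.
apply/andP; split; lia.
Qed.

Lemma zinv N m x' xminv j : (0 < m)%N -> (0 < x')%N ->
  (xminv * x' == 1 %[mod 2 ^ m])%N ->
  0 <= zseq N m x' xminv j < x'%:Z /\
  exists w : int, N%:Z - (2 ^ (j * m))%:Z * ((N %/ 2 ^ (j * m))%:Z - zseq N m x' xminv j)
     = x'%:Z * w.
Proof.
move=> m0 x0 hinv; elim: j => [|j [/andP [z0 zx] [w Hw]]].
  split; first by rewrite /= ltz_nat x0.
  by exists 0; rewrite /= mul0n expn0 divn1 subr0 mul1r subrr mulr0.
have [E H12] := zstep N j m0 x0 hinv z0 zx.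
split; first exact: H12.
set zj := zseq N m x' xminv j in z0 zx Hw E *.
set c := ctrl N m x' xminv j zj in E *.
rewrite /=; rewrite -/zj -/c.
set z1 := ((zj + c * x'%:Z) %/ (2 ^ m)%:Z)%Z in E *.
have HP : (2 ^ (j.+1 * m) = 2 ^ (j * m) * 2 ^ m)%N by rewrite mulSn expnD mulnC.
have HR : (N %/ 2 ^ (j * m) = 2 ^ m * (N %/ 2 ^ (j.+1 * m)) + Nblock N m j)%N.
  by rewrite HP divnMA /Nblock [(2 ^ m * _)%N]mulnC -divn_eq.
exists (w + (2 ^ (j * m))%:Z * c).
move: Hw HR; set R1 := (N %/ 2 ^ (j.+1 * m))%N => Hw HR.
move: Hw; rewrite HR HP !PoszD !PoszM.
have -> : zj = (Nblock N m j)%:Z + (2 ^ m)%:Z * z1 - c * x'%:Z by rewrite -E; ring.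
move=> Hw.
have -> : N%:Z = x'%:Z * w + (2 ^ (j * m))%:Z * ((2 ^ m)%:Z * R1%:Z +
   (Nblock N m j)%:Z - ((Nblock N m j)%:Z + (2 ^ m)%:Z * z1 - c * x'%:Z)).
  by rewrite -Hw; ring.
ring.
Qed.

Unset Implicit Arguments.

Theorem lemma4p5 (m n N x t x' xminv : nat) :
  (0 < m)%N -> (0 < n)%N -> (m %| n)%N ->
  (0 < N)%N -> odd N -> (N < 2 ^ n)%N ->
  (0 < x)%N -> (x < 2 ^ m)%N ->
  x = (2 ^ t * x')%N -> odd x' ->
  (xminv < 2 ^ m)%N -> (xminv * x' == 1 %[mod 2 ^ m])%N ->
  let z := zseq N m x' xminv (n %/ m - 1) in
  let s := (N %/ 2 ^ (n - m))%:Z - z in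
  let out : int :=
    ((-1) ^+ ((N ^ 2 - 1) %/ 8)) ^+ t
    * (-1) ^+ (((x' - 1) * (N - 1)) %/ 4)
    * ((-1) ^+ ((x' ^ 2 - 1) %/ 8)) ^+ (n - m)
    * jacobi s x' in
  out = jacobi x%:Z N /\ `|s| < (2 ^ m)%:Z.
Proof.
move=> m0 n0 mn N0 oN Nlt x0 xlt xe ox' xmlt hinv z s out.
have x'0 : (0 < x')%N by move: x0; rewrite xe muln_gt0 => /andP [].
have x'x : (x' <= x)%N by rewrite xe leq_pmull // expn_gt0.
have mlen : (m <= n)%N by apply: dvdn_leq.
have km : ((n %/ m - 1) * m = n - m)%N by rewrite mulnBl divnK // mul1n.
have [/andP [z0 zx] [w Hw]] := @zinv N m x' xminv (n %/ m - 1) m0 x'0 hinv.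
rewrite km -/z in Hw.
split.
  have Hc : (N%:Z == (2 ^ (n - m))%:Z * s %[mod x'])%Z.
    by rewrite eqz_mod_dvd /s Hw dvdz_mulr // dvdzz.
  have JN : jacobi N x' = (-1) ^+ ((x' ^ 2 - 1) %/ 8) ^+ (n - m) * jacobi s x'.
    by rewrite (J_mod Hc) J_mull // J_pow2 // J2.
  rewrite xe PoszM J_mull // J_pow2 // J2 // J_QR // JN qe_eq // /out; ring.
have RD : (N %/ 2 ^ (n - m) < 2 ^ m)%N.
  by rewrite ltn_divLR ?expn_gt0 // -expnD subnKC.
have xD : (x' < 2 ^ m)%N by apply: leq_ltn_trans xlt.
rewrite ltr_norml /s.
move: RD xD z0 zx; rewrite -/z; clearbody z; clear.
move: (2 ^ m)%N (N %/ 2 ^ (n - m))%N => D R RD xD z0 zx.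
rewrite -!ltz_nat in RD xD.
apply/andP; split; lia.
Qed.
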